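(* Consider the dynamic setting: $K\ge2$, $\delta\in(0,1/K]$, $c,c_\eta>0$; $\mathbf z_t\in\Delta^{K-1}$, $|\widetilde f_t|\le c$, $\ell_t(\mathbf w)=-\widetilde f_t\mathbf w^\top\mathbf z_t$; $\widehat{\mathbf w}_1$ uniform and $\widehat{\mathbf w}_{t+1}=\arg\min_{\mathbf w\in\Delta^{K-1}}\{\eta_t\nabla\ell_t^\top\mathbf w+\mathrm{KL}(\mathbf w\|\widehat{\mathbf w}_t)\}$ with $\eta_t=\eta_0/\sqrt{1+c_\eta t}$; comparators $\mathbf w_1,\dots,\mathbf w_T$ and iterates $\widehat{\mathbf w}_1,\dots,\widehat{\mathbf w}_{T+1}$ all in $\Delta^{K-1}_\delta$. Let $V_T=\sum_{t=2}^T\|\mathbf w_t-\mathbf w_{t-1}\|_1$, $L_\delta=1+\log(1/\delta)$, $A_T:=\log(1/\delta)+L_\delta V_T$, $\eta_0=\sqrt{c_\eta A_T}/c$, and $R^{\mathrm{dyn}}_T=\sum_{t\le T}(\ell_t(\widehat{\mathbf w}_t)-\ell_t(\mathbf w_t))$. Then for any $\varepsilon>0$, $\frac1T R_T^{\mathrm{dyn}}\le\varepsilon$ holds whenever $$T\ge\frac{2}{\varepsilon^2}\left(c^2A_T+\sqrt{c^4A_T^2+\frac{\varepsilon^2c^2A_T}{c_\eta}}\right).$$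
   Context: $\Delta^{K-1}$ is the probability simplex; $\Delta^{K-1}_\delta=\{\mathbf w\in\Delta^{K-1}:w_k\ge\delta\ \forall k\}$; $\mathrm{KL}(\mathbf u\|\mathbf w)=\sum_k u_k\log(u_k/w_k)$. *)

(* Defs.v *)
From HB Require Import structures.
From mathcomp Require Import all_boot all_order all_algebra.
From mathcomp Require Import reals exp.
Set Implicit Arguments. Unset Strict Implicit. Unset Printing Implicit Defensive.
Import Order.TTheory GRing.Theory Num.Theory.
Local Open Scope ring_scope.

Section Defs.
Variables (R : realType) (K : nat).

Definition in_simplex (w : 'I_K -> R) : Prop :=
  (forall k, 0 <= w k) /\ \sum_(k < K) w k = 1.

Definition in_simplex_delta (delta : R) (w : 'I_K -> R) : Prop :=
  in_simplex w /\ (forall k, delta <= w k).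

Definition dotp (u v : 'I_K -> R) : R := \sum_(k < K) u k * v k.

(* KL(u || w) = sum_k u_k log(u_k / w_k)  (ln 0 = 0 gives 0 log 0 = 0) *)
Definition KL (u w : 'I_K -> R) : R := \sum_(k < K) u k * ln (u k / w k).

Definition loss (f : R) (z w : 'I_K -> R) : R := - (f * dotp w z).

Definition grad_loss (f : R) (z : 'I_K -> R) : 'I_K -> R := fun k => - (f * z k).

Definition uniform : 'I_K -> R := fun _ => (K%:R)^-1.

Definition is_md_step (eta : R) (g wprev w' : 'I_K -> R) : Prop :=
  in_simplex w' /\
  forall w, in_simplex w -> eta * dotp g w' + KL w' wprev <= eta * dotp g w + KL w wprev.

Definition path_length (T : nat) (w : nat -> 'I_K -> R) : R :=
  \sum_(2 <= t < T.+1) \sum_(k < K) `|w t k - w t.-1 k|.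

Definition Ldelta (delta : R) : R := 1 + ln (delta^-1).

Definition A_T (delta : R) (T : nat) (w : nat -> 'I_K -> R) : R :=
  ln (delta^-1) + Ldelta delta * path_length T w.

Definition eta0 (c ceta A : R) : R := Num.sqrt (ceta * A) / c.
Definition eta_t (c ceta A : R) (t : nat) : R := eta0 c ceta A / Num.sqrt (1 + ceta * t%:R).

Definition dyn_regret (T : nat) (f : nat -> R) (z wh w : nat -> 'I_K -> R) : R :=
  \sum_(1 <= t < T.+1) (loss (f t) (z t) (wh t) - loss (f t) (z t) (w t)).

End Defs.

(* Main.v *)
Require Import Defs.
From HB Require Import structures.
From mathcomp Require Import all_boot all_order all_algebra.
From mathcomp Require Import reals exp.
From mathcomp Require Import ring lra.
Import Order.TTheory GRing.Theory Num.Theory.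
Local Open Scope ring_scope.

Section Helpers.
Variables (R : realType) (K : nat).
Implicit Types (u v p q : 'I_K -> R).

Lemma ln_le_sub1 (y : R) : 0 < y -> ln y <= y - 1.
Proof.
move=> y0; have := @le_ln1Dx R (y - 1).
rewrite (_ : 1 + (y - 1) = y); last by ring.
apply; lra.
Qed.

Lemma simplex_le1 v k : in_simplex v -> v k <= 1.
Proof.
case=> v0 vs; rewrite -vs (bigD1 k) //= lerDl.
by apply: sumr_ge0 => i _.
Qed.

Lemma sum_lin (h : 'I_K -> R) p u (s : R) :
  \sum_(k < K) (p k + s * (u k - p k)) * h k =
  \sum_(k < K) p k * h k + s * (\sum_(k < K) u k * h k - \sum_(k < K) p k * h k).
Proof.
rewrite -sumrB mulr_sumr -big_split /=; apply: eq_bigr => k _; ring.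
Qed.

Lemma limit_le (x y C : R) : 0 <= C ->
  (forall s, 0 < s -> s < 1 -> x <= y + s * C) -> x <= y.
Proof.
move=> C0 H; case: (lerP x y) => // yx.
pose d := x - y; pose D := d + C + 1.
have d0 : 0 < d by rewrite /d; lra.
have D0 : 0 < D by rewrite /D; lra.
pose s := d / D.
have sD : s * D = d by rewrite /s mulfVK // gt_eqF.
have s0 : 0 < s by rewrite /s divr_gt0.
have s1 : s < 1 by rewrite /s ltr_pdivrMr // mul1r /D; lra.
have := H s s0 s1.
have eD : D = d + C + 1 by [].
have ed : d = x - y by [].
clearbody s D d.
move=> h.
have : s * C = d - s * d - s by rewrite -[X in X - _ - _]sD eD; ring.
move=> e; rewrite e in h.
have : 0 < s * d by rewrite mulr_gt0.
lra.
Qed.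


Lemma dotpE (g w : 'I_K -> R) : dotp g w = \sum_(k < K) w k * g k.
Proof. by apply: eq_bigr => k _; rewrite mulrC. Qed.

Lemma first_order (eta : R) (g : 'I_K -> R) p q u :
  (forall k, 0 < p k) -> (forall k, 0 < q k) -> is_md_step eta g q p -> in_simplex u ->
  eta * dotp g p + KL p q <= eta * dotp g u + \sum_(k < K) u k * ln (p k / q k).
Proof.
move=> p0 q0 [ps md] us.
pose C := \sum_(k < K) (u k - p k) ^+ 2 / p k.
have C0 : 0 <= C by apply: sumr_ge0 => k _; rewrite divr_ge0 ?sqr_ge0 ?ltW.
apply: (@limit_le _ _ C C0) => s s0 s1.
pose ws k := p k + s * (u k - p k).
have ws0 k : 0 < ws k.
  have := p0 k; have := us.1 k; rewrite /ws => h1 h2.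
  have : 0 < (1 - s) * p k by rewrite mulr_gt0 // subr_gt0.
  have : 0 <= s * u k by rewrite mulr_ge0 // ltW.
  lra.
have wsS : in_simplex ws.
  split; first by move=> k; exact: ltW.
  rewrite /ws big_split /= -mulr_sumr sumrB ps.2 us.2 subrr mulr0 addr0.
  done.
have := md _ wsS.
have eG : dotp g ws = dotp g p + s * (dotp g u - dotp g p).
  by rewrite !dotpE sum_lin.
have eK : KL ws q = \sum_(k < K) ws k * ln (ws k / p k)
     + (\sum_(k < K) p k * ln (p k / q k)
        + s * (\sum_(k < K) u k * ln (p k / q k) - \sum_(k < K) p k * ln (p k / q k))).
  rewrite -sum_lin -big_split /=; apply: eq_bigr => k _.
  rewrite -mulrDr; congr (_ * _).
  rewrite -lnM ?posrE ?divr_gt0 //; congr ln.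
  by field; rewrite ?gt_eqF.
have eX : \sum_(k < K) ws k * ln (ws k / p k) <= s ^+ 2 * C.
  apply: (@le_trans _ _ (\sum_(k < K) (s ^+ 2 * ((u k - p k) ^+ 2 / p k) + s * (u k - p k)))).
    apply: ler_sum => k _.
    apply: (@le_trans _ _ (ws k * (ws k / p k - 1))).
      apply: ler_wpM2l; [exact: ltW | apply: ln_le_sub1; exact: divr_gt0].
    rewrite /ws le_eqVlt; apply/orP; left; apply/eqP.
    by field; rewrite ?gt_eqF.
  rewrite big_split /= -!mulr_sumr sumrB ps.2 us.2 subrr mulr0 addr0 //.
have -> : KL p q = \sum_(k < K) p k * ln (p k / q k) by [].
rewrite eK eG.
move: eX.
set X := \sum_(k < K) ws k * ln (ws k / p k).
set Gp := dotp g p. set Gu := dotp g u.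
set Sp := \sum_(k < K) p k * ln (p k / q k).
set Su := \sum_(k < K) u k * ln (p k / q k).
move=> hX hm.
have h2 : 0 <= s * (eta * (Gu - Gp) + Su - Sp + s * C).
  have -> : s * (eta * (Gu - Gp) + Su - Sp + s * C) =
     eta * (Gp + s * (Gu - Gp)) + (X + (Sp + s * (Su - Sp))) - (eta * Gp + Sp)
       + (s ^+ 2 * C - X) by ring.
  lra.
rewrite pmulr_rge0 // in h2; lra.
Qed.


Lemma plnq_ge (P Q : R) : 0 < P -> 0 < Q ->
  2 * P - 2 * (Num.sqrt P * Num.sqrt Q) <= P * ln (P / Q).
Proof.
move=> P0 Q0.
set a := Num.sqrt P; set b := Num.sqrt Q.
have a0 : 0 < a by rewrite sqrtr_gt0.
have b0 : 0 < b by rewrite sqrtr_gt0.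
have ea : P = a ^+ 2 by rewrite sqr_sqrtr // ltW.
have eb : Q = b ^+ 2 by rewrite sqr_sqrtr // ltW.
have -> : P / Q = (a / b) ^+ 2 by rewrite ea eb expr_div_n.
rewrite lnXn ?divr_gt0 //.
have h : ln (b / a) <= b / a - 1 by apply: ln_le_sub1; rewrite divr_gt0.
have : ln (b / a) = - ln (a / b) by rewrite -lnV ?posrE ?divr_gt0 // invf_div.
move=> e; rewrite e in h.
have -> : 2 * P - 2 * (a * b) = P * (2 * (1 - b / a)) by rewrite ea; field; rewrite gt_eqF.
rewrite mulr2n ler_wpM2l //; first by rewrite ea sqr_ge0.
lra.
Qed.

Lemma scalar_bound (eta c G P Q : R) : 0 <= eta -> `|G| <= c / 2 -> 0 < P -> 0 < Q ->
  eta * G * (Q - P) - (P * ln (P / Q) - P + Q) <= eta ^+ 2 * c ^+ 2 / 8 * (P + Q).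
Proof.
move=> e0 hG P0 Q0.
have hl := @plnq_ge P Q P0 Q0.
move: hl.
set a := Num.sqrt P; set b := Num.sqrt Q => hl.
have a0 : 0 < a by rewrite sqrtr_gt0.
have b0 : 0 < b by rewrite sqrtr_gt0.
have ea : P = a ^+ 2 by rewrite sqr_sqrtr // ltW.
have eb : Q = b ^+ 2 by rewrite sqr_sqrtr // ltW.
pose d := `|b - a|.
have d0 : 0 <= d by rewrite /d.
have ed : d ^+ 2 = (b - a) ^+ 2 by rewrite real_normK // num_real.
have hQP : `|Q - P| = d * (a + b).
  rewrite ea eb (_ : b ^+ 2 - a ^+ 2 = (b - a) * (a + b)); last by ring.
  by rewrite /d normrM (@ger0_norm _ (a + b)) // addr_ge0 // ltW.
have hx : eta * G * (Q - P) <= eta * (c / 2) * (d * (a + b)).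
  apply: (le_trans (ler_norm _)).
  rewrite !normrM (ger0_norm e0) hQP.
  apply: ler_wpM2r; first by rewrite mulr_ge0 // addr_ge0 // ltW.
  by apply: ler_wpM2l.
set X := eta * (c / 2) * (a + b).
have hx' : eta * G * (Q - P) <= X * d by rewrite /X -mulrA (mulrC d) !mulrA in hx *; lra.
have s1 : 0 <= (X / 2 - d) ^+ 2 by apply: sqr_ge0.
have s2 : 0 <= (eta * c) ^+ 2 * (a - b) ^+ 2 by rewrite mulr_ge0 // sqr_ge0.
rewrite ea eb in hl *.
have : (X / 2 - d) ^+ 2 = X ^+ 2 / 4 - X * d + d ^+ 2 by field.
have : X ^+ 2 / 4 = (eta * c) ^+ 2 * (a + b) ^+ 2 / 16 by rewrite /X; field.
nra.
Qed.


Lemma local_bound (eta c fv : R) (zz p q : 'I_K -> R) :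
  0 <= eta -> `|fv| <= c -> in_simplex zz -> in_simplex p -> in_simplex q ->
  (forall k, 0 < p k) -> (forall k, 0 < q k) ->
  eta * dotp (grad_loss fv zz) q - eta * dotp (grad_loss fv zz) p - KL p q
    <= eta ^+ 2 * c ^+ 2 / 4.
Proof.
move=> e0 hf zs ps qs p0 q0.
set g := grad_loss fv zz.
pose m := - fv / 2.
have eD : dotp g q - dotp g p = \sum_(k < K) (g k - m) * (q k - p k).
  have -> : \sum_(k < K) (g k - m) * (q k - p k) =
     \sum_(k < K) (g k * q k - g k * p k) - m * (\sum_(k < K) q k - \sum_(k < K) p k).
    rewrite -sumrB mulr_sumr -sumrB; apply: eq_bigr => k _; ring.
  by rewrite qs.2 ps.2 subrr mulr0 subr0 sumrB.
have eK : KL p q = \sum_(k < K) (p k * ln (p k / q k) - p k + q k).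
  rewrite big_split /= sumrB ps.2 qs.2 subrK //.
have -> : eta * dotp g q - eta * dotp g p - KL p q =
   \sum_(k < K) (eta * (g k - m) * (q k - p k) - (p k * ln (p k / q k) - p k + q k)).
  rewrite sumrB -eK -mulrBr eD mulr_sumr; congr (_ - _); apply: eq_bigr => k _; ring.
apply: (@le_trans _ _ (\sum_(k < K) (eta ^+ 2 * c ^+ 2 / 8 * (p k + q k)))).
  apply: ler_sum => k _; apply: scalar_bound => //.
  rewrite /g /grad_loss /m.
  have -> : - (fv * zz k) - - fv / 2 = fv * (2^-1 - zz k) by field.
  rewrite normrM.
  have z0 := zs.1 k; have z1 := @simplex_le1 zz k zs.
  have : `|2^-1 - zz k| <= 2^-1 by rewrite ler_norml; apply/andP; split; lra.
  move=> h.
  by apply: ler_pM.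
rewrite -mulr_sumr big_split /= ps.2 qs.2; rewrite le_eqVlt; apply/orP; left; apply/eqP; by field.
Qed.


Lemma F1 (W L : 'I_K -> R) (l : R) : in_simplex W -> (forall k, - l <= L k) ->
  - \sum_(k < K) W k * L k <= l.
Proof.
move=> [W0 Ws] hL.
rewrite -sumrN; apply: (@le_trans _ _ (\sum_(k < K) W k * l)).
  by apply: ler_sum => k _; rewrite -mulrN ler_wpM2l // lerNl.
by rewrite -mulr_suml Ws mul1r.
Qed.

Lemma F2 (W W' L : 'I_K -> R) (l : R) : (forall k, - l <= L k <= 0) ->
  \sum_(k < K) (W' k - W k) * L k <= l * \sum_(k < K) `|W k - W' k|.
Proof.
move=> hL; rewrite mulr_sumr; apply: ler_sum => k _.
apply: (le_trans (ler_norm _)); rewrite normrM distrC mulrC.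
apply: ler_wpM2r => //.
have := hL k; rewrite ler_norml => /andP [h1 h2]; apply/andP; split => //.
by apply: (le_trans h2); have : 0 <= l by lra.
Qed.

Lemma by_parts (T : nat) (a : nat -> R) (W L : nat -> 'I_K -> R) (l : R) :
  0 <= l ->
  (forall t, (1 <= t <= T)%N -> 0 <= a t) ->
  (forall t, (1 <= t < T)%N -> a t <= a t.+1) ->
  (forall t, (1 <= t <= T)%N -> in_simplex (W t)) ->
  (forall t k, (1 <= t <= T.+1)%N -> - l <= L t k <= 0) ->
  forall n, (n.+1 <= T)%N ->
  \sum_(1 <= t < n.+2) a t * \sum_(k < K) W t k * (L t.+1 k - L t k)
  <= a n.+1 * \sum_(k < K) W n.+1 k * L n.+2 k + a n.+1 * l
     + l * \sum_(2 <= t < n.+2) a t.-1 * \sum_(k < K) `|W t k - W t.-1 k|.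
Proof.
move=> l0 a0 amono Ws Lb.
have sB : forall t, \sum_(k < K) W t k * (L t.+1 k - L t k) =
   \sum_(k < K) W t k * L t.+1 k - \sum_(k < K) W t k * L t k.
  by move=> t; rewrite -sumrB; apply: eq_bigr => k _; rewrite mulrBr.
elim=> [|n IH] hn.
  rewrite big_nat1 big_geq // mulr0 addr0 sB mulrBr.
  have : - \sum_(k < K) W 1%N k * L 1%N k <= l.
    by apply: F1; [apply: Ws | move=> k; have /andP[] := Lb 1%N k isT].
  move=> h; have a1 : 0 <= a 1%N by apply: a0; rewrite /= hn.
  have := ler_wpM2l a1 h; lra.
rewrite big_nat_recr //= [X in _ <= _ + _ + l * X]big_nat_recr //=.
have IH' := IH (ltnW hn).
have Wn1 : in_simplex (W n.+1) by apply: Ws; rewrite /= ltnW.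
have Wn2 : in_simplex (W n.+2) by apply: Ws; rewrite /= hn.
have an1 : 0 <= a n.+1 by apply: a0; rewrite /= ltnW.
have amn : a n.+1 <= a n.+2 by apply: amono.
have Lb2 : forall k, - l <= L n.+2 k <= 0 by move=> k; apply: Lb; rewrite /= ltnW.
have hx : \sum_(k < K) W n.+1 k * L n.+2 k - \sum_(k < K) W n.+2 k * L n.+2 k
    <= l * \sum_(k < K) `|W n.+2 k - W n.+1 k|.
  rewrite -sumrB; under eq_bigr do rewrite -mulrBl.
  exact: F2.
have hy : - \sum_(k < K) W n.+2 k * L n.+2 k <= l.
  by apply: F1 => // k; have /andP[] := Lb2 k.
have h1 := ler_wpM2l an1 hx.
have d0 : 0 <= a n.+2 - a n.+1 by rewrite subr_ge0.
have h2 := ler_wpM2l d0 hy.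
rewrite sB.
set x := \sum_(k < K) W n.+1 k * L n.+2 k in IH' hx h1.
set y := \sum_(k < K) W n.+2 k * L n.+2 k in hx hy h1 h2 *.
set D := \sum_(k < K) `|W n.+2 k - W n.+1 k| in hx h1 *.
nra.
Qed.


Lemma inv_sqrt_sum (ce : R) n : 0 < ce ->
  \sum_(1 <= t < n.+1) (Num.sqrt (1 + ce * t%:R))^-1
    <= 2 * (Num.sqrt (1 + ce * n%:R) - 1) / ce.
Proof.
move=> ce0; elim: n => [|n IH].
  by rewrite big_geq // mulr0 addr0 sqrtr1 subrr mulr0 mul0r.
rewrite big_nat_recr //=.
set x := Num.sqrt (1 + ce * n.+1%:R).
set y := Num.sqrt (1 + ce * n%:R) in IH *.
have y0 : 0 <= y by apply: sqrtr_ge0.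
have n0 : 0 <= n%:R :> R by apply: ler0n.
have x0 : 0 < x by rewrite sqrtr_gt0 -natr1; nra.
have ex : x ^+ 2 = y ^+ 2 + ce.
  rewrite /x /y !sqr_sqrtr -?natr1; [ring| nra | nra].
have key : x^-1 <= 2 * (x - y) / ce.
  have xc : 0 < x * ce by rewrite mulr_gt0.
  rewrite -(ler_pM2r xc).
  have -> : x^-1 * (x * ce) = ce by field; rewrite gt_eqF.
  have -> : 2 * (x - y) / ce * (x * ce) = 2 * x * (x - y) by field; rewrite gt_eqF.
  have : 0 <= (x - y) ^+ 2 by apply: sqr_ge0.
  nra.
have -> : 2 * (x - 1) / ce = 2 * (y - 1) / ce + 2 * (x - y) / ce by field; rewrite gt_eqF.
exact: lerD.
Qed.


Lemma loss_dotp (fv : R) (zz v : 'I_K -> R) :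
  loss fv zz v = dotp (grad_loss fv zz) v.
Proof.
rewrite /loss /dotp /grad_loss mulr_sumr -sumrN; apply: eq_bigr => k _; ring.
Qed.

End Helpers.
Arguments ln_le_sub1 {R}.
Arguments simplex_le1 {R K}.
Arguments first_order {R K}.
Arguments local_bound {R K}.
Arguments by_parts {R K}.
Arguments inv_sqrt_sum {R}.
Arguments loss_dotp {R K}.



Lemma final_arith (R : realType) (c ce eps A s B Q Rg TT : R) :
  0 < c -> 0 < ce -> 0 < eps -> 0 < A -> 0 < s -> s ^+ 2 = ce * A ->
  1 <= B -> B ^+ 2 = 1 + ce * TT -> 0 <= Q ->
  Q ^+ 2 = c ^+ 4 * A ^+ 2 + eps ^+ 2 * c ^+ 2 * A / ce -> 0 < TT ->
  2 / eps ^+ 2 * (c ^+ 2 * A + Q) <= TT ->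
  Rg <= c ^+ 2 / 4 * (s / c * (2 * (B - 1) / ce)) + B * c / s * A ->
  Rg <= eps * TT.
Proof.
move=> c0 ce0 e0 A0 s0 es B1 eB Q0 eQ T0 HT hR.
set F := c ^+ 2 / 4 * (s / c * (2 * (B - 1) / ce)) in hR.
set M := B * c / s * A in hR.
have eF : F * (2 * ce) = c * s * (B - 1) by rewrite /F; field; rewrite !gt_eqF.
have eM : M * s = B * c * A by rewrite /M; field; rewrite gt_eqF.
have M0 : 0 <= M by rewrite /M !mulr_ge0 // ?invr_ge0 ?ltW //; lra.
have F0 : 0 <= F.
  have : 0 <= F * (2 * ce).
    rewrite eF; apply: mulr_ge0; [apply: mulr_ge0; exact: ltW | by rewrite subr_ge0].

  rewrite pmulr_lge0 // mulr_gt0 //.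
clearbody F M.
have eMc : M * ce = c * B * s.
  apply: (mulIf (lt0r_neq0 A0)).
  have -> : M * ce * A = M * (ce * A) by ring.
  rewrite -es (_ : M * s ^+ 2 = (M * s) * s); last by ring.
  rewrite eM; ring.
have hF : 2 * F <= M.
  have e : (M - 2 * F) * ce = c * s.
    have -> : (M - 2 * F) * ce = M * ce - F * (2 * ce) by ring.
    rewrite eMc eF; ring.
  have : 0 <= (M - 2 * F) * ce by rewrite e mulr_ge0 // ltW.
  rewrite pmulr_lge0 //; lra.
have eM2 : M ^+ 2 * ce = c ^+ 2 * (1 + ce * TT) * A.
  apply: (mulIf (lt0r_neq0 ce0)).
  have -> : M ^+ 2 * ce * ce = (M * ce) ^+ 2 by ring.
  rewrite eMc -eB.
  have -> : (c * B * s) ^+ 2 = c ^+ 2 * B ^+ 2 * s ^+ 2 by ring.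
  rewrite es; ring.
have e2 : 0 < eps ^+ 2 by rewrite exprn_gt0.
have eQc : Q ^+ 2 * ce = c ^+ 4 * A ^+ 2 * ce + eps ^+ 2 * c ^+ 2 * A.
  by rewrite eQ; field; rewrite gt_eqF.
have h1 : 2 * (c ^+ 2 * A + Q) <= eps ^+ 2 * TT.
  have := ler_wpM2l (ltW e2) HT.
  have -> : eps ^+ 2 * (2 / eps ^+ 2 * (c ^+ 2 * A + Q)) = 2 * (c ^+ 2 * A + Q).
    by field; rewrite gt_eqF.
  done.
set Y := eps ^+ 2 * TT / 2 - c ^+ 2 * A.
have hY : Q <= Y by rewrite /Y; lra.
have hY2 : Q ^+ 2 <= Y ^+ 2.
  have : 0 <= (Y - Q) * (Y + Q) by rewrite mulr_ge0 //; lra.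
  have : (Y - Q) * (Y + Q) = Y ^+ 2 - Q ^+ 2 by ring.
  lra.
have hY3 : Q ^+ 2 * ce <= Y ^+ 2 * ce by rewrite ler_pM2r.
rewrite eQc in hY3.
have HQ : 4 * (c ^+ 2 * (1 + ce * TT) * A) <= (eps * TT) ^+ 2 * ce.
  have : 0 <= eps ^+ 2 * ((eps * TT) ^+ 2 * ce - 4 * (c ^+ 2 * (1 + ce * TT) * A)).
    have -> : eps ^+ 2 * ((eps * TT) ^+ 2 * ce - 4 * (c ^+ 2 * (1 + ce * TT) * A))
       = 4 * (Y ^+ 2 * ce - (c ^+ 4 * A ^+ 2 * ce + eps ^+ 2 * c ^+ 2 * A)).
      by rewrite /Y; field.
    rewrite mulr_ge0 //; lra.
  rewrite pmulr_rge0 //; lra.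
rewrite -eM2 in HQ.
have HM : 4 * M ^+ 2 <= (eps * TT) ^+ 2.
  by rewrite -(ler_pM2r ce0) -mulrA.
have eT0 : 0 <= eps * TT by rewrite mulr_ge0 // ltW.
have h2M : 2 * M <= eps * TT.
  have : (2 * M) ^+ 2 <= (eps * TT) ^+ 2 by rewrite exprMn; lra.
  rewrite ler_sqr ?nnegrE //; rewrite mulr_ge0 //.
lra.
Qed.
Arguments final_arith {R c ce eps A s B Q Rg TT}.


Theorem corollaryB3 (R : realType) (K : nat) (delta c ceta : R) (T : nat)
  (z : nat -> 'I_K -> R) (f : nat -> R) (wh w : nat -> 'I_K -> R) (eps : R) :
  (2 <= K)%N -> 0 < delta -> delta <= (K%:R)^-1 -> 0 < c -> 0 < ceta ->
  (forall t, (1 <= t <= T)%N -> in_simplex (z t)) ->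
  (forall t, (1 <= t <= T)%N -> `|f t| <= c) ->
  wh 1%N = @uniform R K ->
  (forall t, (1 <= t <= T)%N ->
     is_md_step (eta_t c ceta (A_T delta T w) t) (grad_loss (f t) (z t)) (wh t) (wh t.+1)) ->
  (forall t, (1 <= t <= T)%N -> in_simplex_delta delta (w t)) ->
  (forall t, (1 <= t <= T.+1)%N -> in_simplex_delta delta (wh t)) ->
  0 < eps ->
  2 / eps ^+ 2 * (c ^+ 2 * A_T delta T w
      + Num.sqrt (c ^+ 4 * (A_T delta T w) ^+ 2
                  + eps ^+ 2 * c ^+ 2 * A_T delta T w / ceta)) <= T%:R ->
  dyn_regret T f z wh w / T%:R <= eps.
Proof.
move=> K2 d0 dK c0 ce0 zS fB wh1 md wS whS e0 HT.
case: (posnP T) => [->|Tpos].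
  by rewrite invr0 mulr0 ltW.
set A := A_T delta T w in md HT *.
set l := ln (delta^-1).
have K0 : (2 : R) <= K%:R by rewrite ler_nat.
have dlt1 : delta < 1.
  apply: (le_lt_trans dK); rewrite invf_lt1 //; lra.
have l0 : 0 < l by rewrite /l ln_gt0 // invf_gt1.
have V0 : 0 <= path_length T w.
  by apply: sumr_ge0 => t _; apply: sumr_ge0 => k _.
have A0 : 0 < A.
  rewrite /A /A_T /Ldelta -/l.
  have : 0 <= (1 + l) * path_length T w by rewrite mulr_ge0 //; lra.
  lra.
set s := Num.sqrt (ceta * A).
have s0 : 0 < s by rewrite sqrtr_gt0 mulr_gt0.
have es : s ^+ 2 = ceta * A by rewrite sqr_sqrtr // ltW // mulr_gt0.
have eeta : forall t, eta_t c ceta A t = s / c / Num.sqrt (1 + ceta * t%:R) by [].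
have sq0 : forall t : nat, 0 < Num.sqrt (1 + ceta * t%:R).
  move=> t; rewrite sqrtr_gt0; have : 0 <= ceta * t%:R by rewrite mulr_ge0 // ltW.
  lra.
have eta0 : forall t, 0 < eta_t c ceta A t.
  by move=> t; rewrite eeta !divr_gt0.
pose a t := (eta_t c ceta A t)^-1.
have ea : forall t, a t = Num.sqrt (1 + ceta * t%:R) * c / s.
  move=> t; rewrite /a eeta invf_div; field; rewrite !gt_eqF //.
have whpos : forall t k, (1 <= t <= T.+1)%N -> 0 < wh t k.
  by move=> t k ht; have [_ /(_ k)] := whS t ht; apply: lt_le_trans.
have step : forall t, (1 <= t <= T)%N ->
   loss (f t) (z t) (wh t) - loss (f t) (z t) (w t) <=
   eta_t c ceta A t * c ^+ 2 / 4 +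
   a t * \sum_(k < K) w t k * (ln (wh t.+1 k) - ln (wh t k)).
  move=> t /andP [t1 tT].
  have ht1 : (1 <= t <= T.+1)%N by rewrite t1 ltnW.
  have ht2 : (1 <= t.+1 <= T.+1)%N by rewrite /= ltnS tT.
  have htT : (1 <= t <= T)%N by rewrite t1 tT.
  set eta := eta_t c ceta A t.
  have he := eta0 t.
  have p0 : forall k, 0 < wh t.+1 k by move=> k; apply: whpos.
  have q0 : forall k, 0 < wh t k by move=> k; apply: whpos.
  have hl := local_bound eta c (f t) (z t) (wh t.+1) (wh t) (ltW he) (fB t htT) (zS t htT)
      (whS _ ht2).1 (whS _ ht1).1 p0 q0.
  have hf := first_order eta (grad_loss (f t) (z t)) (wh t.+1) (wh t) (w t) p0 q0 (md t htT)
      (wS t htT).1.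
  have eL : \sum_(k < K) w t k * ln (wh t.+1 k / wh t k) =
            \sum_(k < K) w t k * (ln (wh t.+1 k) - ln (wh t k)).
    by apply: eq_bigr => k _; rewrite ln_div ?posrE.
  rewrite eL in hf.
  rewrite !loss_dotp.
  set Gq := dotp _ (wh t) in hl hf *.
  set Gp := dotp _ (wh t.+1) in hl hf *.
  set Gu := dotp _ (w t) in hl hf *.
  set S := \sum_(k < K) _ in hf *.
  have h : eta * (Gq - Gu) <= eta ^+ 2 * c ^+ 2 / 4 + S by lra.
  have -> : eta * c ^+ 2 / 4 + a t * S = eta^-1 * (eta ^+ 2 * c ^+ 2 / 4 + S).
    by rewrite /a -/eta; field; rewrite gt_eqF.
  rewrite -(ler_pM2l he) mulrA mulfV ?gt_eqF // mul1r.
  exact: h.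
have amono : forall t u, (t <= u)%N -> a t <= a u.
  move=> t u tu; rewrite !ea; apply: ler_wpM2r; first by rewrite invr_ge0 ltW.
  apply: ler_wpM2r; first by rewrite ltW.
  have cu : 0 <= ceta * u%:R by rewrite mulr_ge0 // ltW.
  rewrite ler_sqrt; last lra.
  by rewrite lerD2l; apply: ler_wpM2l; [exact: ltW | rewrite ler_nat].
have a0 : forall t, 0 <= a t by move=> t; rewrite /a invr_ge0 ltW.
have hsum : dyn_regret T f z wh w <=
   \sum_(1 <= t < T.+1) (eta_t c ceta A t * c ^+ 2 / 4 +
   a t * \sum_(k < K) w t k * (ln (wh t.+1 k) - ln (wh t k))).
  by apply: ler_sum_nat => t ht; apply: step; rewrite -ltnS.
rewrite big_split /= in hsum.
have hE : \sum_(1 <= t < T.+1) eta_t c ceta A t * c ^+ 2 / 4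
     <= c ^+ 2 / 4 * (s / c * (2 * (Num.sqrt (1 + ceta * T%:R) - 1) / ceta)).
  have -> : \sum_(1 <= t < T.+1) eta_t c ceta A t * c ^+ 2 / 4 =
      c ^+ 2 / 4 * (s / c * \sum_(1 <= t < T.+1) (Num.sqrt (1 + ceta * t%:R))^-1).
    rewrite !mulr_sumr; apply: eq_bigr => t _; rewrite eeta; ring.
  apply: ler_wpM2l; first by rewrite divr_ge0 // sqr_ge0.
  apply: ler_wpM2l; first by rewrite divr_ge0 // ltW.
  exact: inv_sqrt_sum.
have hL : forall t k, (1 <= t <= T.+1)%N -> - l <= ln (wh t k) <= 0.
  move=> t k ht; have [hs /(_ k) hd] := whS t ht.
  have wp : 0 < wh t k by apply: whpos.
  apply/andP; split.
    rewrite /l lnV ?posrE // opprK ler_ln ?posrE //.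
  by apply: ln_le0; apply: simplex_le1.
have hbp := by_parts T a w (fun t k => ln (wh t k)) l (ltW l0)
   (fun t _ => a0 t) (fun t _ => amono t t.+1 (leqnSn t))
   (fun t ht => (wS t ht).1) hL T.-1 (ltac:(by rewrite prednK)).
rewrite !prednK // in hbp.
have hWL : \sum_(k < K) w T k * ln (wh T.+1 k) <= 0.
  apply: sumr_le0 => k _; apply: mulr_ge0_le0.
    have TT : (0 < T <= T)%N by rewrite Tpos leqnn.
    by have [[h _] _] := wS T TT.
  have TT : (1 <= T.+1 <= T.+1)%N by rewrite leqnn.
  by have /andP[_ ->] := hL T.+1 k TT.
have hpath : \sum_(2 <= t < T.+1) a t.-1 * \sum_(k < K) `|w t k - w t.-1 k|
      <= a T * path_length T w.
  rewrite /path_length mulr_sumr; apply: ler_sum_nat => t /andP [t2 tT].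
  apply: ler_wpM2r; first by apply: sumr_ge0.
  by apply: amono; case: t t2 tT => //= t _; rewrite ltnS => /ltnW.
have hAl : l * (1 + path_length T w) <= A.
  rewrite /A /A_T /Ldelta -/l.
  have : l * path_length T w <= (1 + l) * path_length T w.
    apply: ler_wpM2r => //; clear -l0; lra.
  clear -V0 l0; lra.
have aT0 := a0 T.
have hS : \sum_(1 <= t < T.+1) a t *
       \sum_(k < K) w t k * (ln (wh t.+1 k) - ln (wh t k)) <= a T * A.
  have h1 := ler_wpM2l aT0 hWL.
  have h2 := ler_wpM2l (ltW l0) hpath.
  have h3 := ler_wpM2l aT0 hAl.
  rewrite mulr0 in h1.
  have e : a T * (l * (1 + path_length T w)) = a T * l + l * (a T * path_length T w) by ring.
  move: hbp h1 h2 h3 e.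
  set X1 := \sum_(1 <= t < T.+1) _.
  set X2 := \sum_(2 <= t < T.+1) _.
  set X3 := \sum_(k < K) _.
  clear; lra.
set B := Num.sqrt (1 + ceta * T%:R) in hE.
have eaT : a T = B * c / s by rewrite ea.
rewrite eaT in hS.
have hR : dyn_regret T f z wh w <= c ^+ 2 / 4 * (s / c * (2 * (B - 1) / ceta)) + B * c / s * A.
  move: hsum hE hS.
  set X1 := \sum_(1 <= t < T.+1) _.
  set X2 := \sum_(1 <= t < T.+1) _.
  clear; lra.
have ct : 0 <= ceta * T%:R by apply: mulr_ge0; [exact: ltW | exact: ler0n].
have B1 : 1 <= B.
  rewrite /B -[X in X <= _]sqrtr1 ler_sqrt; first by rewrite lerDl.
  by rewrite addr_ge0.
have eB : B ^+ 2 = 1 + ceta * T%:R.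
  by rewrite sqr_sqrtr // addr_ge0.
have T0 : 0 < T%:R :> R by rewrite ltr0n.
have e2 : 0 < eps ^+ 2 by rewrite exprn_gt0.
set Q := Num.sqrt (c ^+ 4 * A ^+ 2 + eps ^+ 2 * c ^+ 2 * A / ceta) in HT.
have Q0 : 0 <= Q by apply: sqrtr_ge0.
have eQ : Q ^+ 2 = c ^+ 4 * A ^+ 2 + eps ^+ 2 * c ^+ 2 * A / ceta.
  have h1 : 0 <= c ^+ 4 * A ^+ 2 by rewrite mulr_ge0 // exprn_ge0 // ltW.
  have h2 : 0 <= eps ^+ 2 * c ^+ 2 * A / ceta.
    by rewrite divr_ge0 ?mulr_ge0 ?exprn_ge0 ?ltW.
  by rewrite /Q sqr_sqrtr // addr_ge0.
rewrite ler_pdivrMr //.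
exact: (final_arith c0 ce0 e0 A0 s0 es B1 eB Q0 eQ T0 HT hR).
Qed.
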